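(* Let $p$ be a prime and let $s(n)_{n\ge0}$ be a sequence of $p$-adic integers satisfying $s(n+\ell)+a_{\ell-1}s(n+\ell-1)+\cdots+a_0s(n)=0$ for all $n\ge0$ with $a_i\in\mathbb{Z}_p$; let $g(x)=x^\ell+a_{\ell-1}x^{\ell-1}+\cdots+a_0$, let $K$ be a splitting field of $g$ over $\mathbb{Q}_p$ with ramification index $e$ and uniformizer $\pi$. If $e<p-1$ and every root $\beta$ of $g(x)$ in $K$ satisfies $\beta\equiv 1\pmod{\pi}$, then $s(n)_{n\ge0}$ can be interpolated to $\mathbb{Z}_p$, i.e. there is a continuous function $t:\mathbb{Z}_p\to K$ with $s(n)=t(n)$ for all $n\ge 0$.
   Context: For a finite extension $K/\mathbb{Q}_p$, $|\cdot|_p$ is the unique extension of the $p$-adic absolute value, the valuation $\nu_p$ ($|x|_p=p^{-\nu_p(x)}$) has image $\frac1e\mathbb Z$ on $K^\times$ where $e$ is the ramification index, and a uniformizer is an element $\pi$ with $\nu_p(\pi)=1/e$. Congruence modulo $\pi$ is in $\mathcal O_K=\{x\in K:|x|_p\le1\}$. *)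

(* Defs.v *)
(* A finite extension K of Q_p is modelled abstractly as a
   field K equipped with an absolute value |.| : K -> R (R a realType) which
   is non-archimedean, normalized by |p| = 1/p, and complete.  Inside such K,
   the closure of Q is (a copy of) Q_p and the closure of Z is Z_p. *)
From HB Require Import structures.
From mathcomp Require Import all_boot all_order all_algebra.
From mathcomp Require Import reals.
Set Implicit Arguments. Unset Strict Implicit. Unset Printing Implicit Defensive.
Import Order.TTheory GRing.Theory Num.Theory.
Local Open Scope ring_scope.

Section Defs.
Variables (R : realType) (K : fieldType) (abs : K -> R).

Definition ultrametric_abs : Prop :=
  [/\ forall x, abs x = 0 <-> x = 0,
      forall x, 0 <= abs x,
      forall x y, abs (x * y) = abs x * abs y &
      forall x y, abs (x + y) <= Num.max (abs x) (abs y)].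

Definition padic_normalized (p : nat) : Prop := abs p%:R = (p%:R)^-1.

Definition abs_complete : Prop :=
  forall u : nat -> K,
    (forall eps : R, 0 < eps -> exists N, forall m n, (N <= m)%N -> (N <= n)%N ->
        abs (u m - u n) < eps) ->
    exists l : K, forall eps : R, 0 < eps -> exists N, forall n, (N <= n)%N ->
        abs (u n - l) < eps.

Definition in_Qp (x : K) : Prop :=
  forall eps : R, 0 < eps -> exists q : rat, abs (x - ratr q) < eps.
Definition in_Zp (x : K) : Prop :=
  forall eps : R, 0 < eps -> exists z : int, abs (x - z%:~R) < eps.

Definition subfield_closed (S : K -> Prop) : Prop :=
  [/\ S 0, S 1,
      forall x y, S x -> S y -> S (x - y),
      forall x y, S x -> S y -> S (x * y) &
      forall x, S x -> S x^-1].

Definition splitting_field_over_Qp (g : {poly K}) : Prop :=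
  (exists rs : seq K, g = \prod_(r <- rs) ('X - r%:P)) /\
  (forall S : K -> Prop, subfield_closed S ->
     (forall x, in_Qp x -> S x) -> (forall r, root g r -> S r) ->
     forall x, S x).

(* ramification index e and uniformizer pi: the value group is generated
   by |pi| and |pi|^e = |p| = 1/p, i.e. nu_p(K^x) = (1/e)Z, nu_p(pi) = 1/e *)
Definition ramification_uniformizer (p e : nat) (pi : K) : Prop :=
  abs pi ^+ e = (p%:R)^-1 /\
  forall x, x != 0 -> exists k : int, abs x = abs pi ^ k.

Definition continuous_on_Zp (t : K -> K) : Prop :=
  forall x, in_Zp x -> forall eps : R, 0 < eps ->
    exists2 delta : R, 0 < delta &
      forall y, in_Zp y -> abs (y - x) < delta -> abs (t y - t x) < eps.

End Defs.

(* Main.v *)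
Require Import Defs.
From HB Require Import structures.
From mathcomp Require Import all_boot all_order all_algebra.
From mathcomp Require Import reals.
From mathcomp Require Import ring zify.
From Stdlib Require Import ClassicalEpsilon.
Set Implicit Arguments. Unset Strict Implicit. Unset Printing Implicit Defensive.
Import Order.TTheory GRing.Theory Num.Theory.
Local Open Scope ring_scope.

Lemma abs0 (R : realType) (K : fieldType) (abs : K -> R) :
  ultrametric_abs abs -> abs 0 = 0.
Proof. by case=> H _ _ _; apply/H. Qed.

Lemma abs1 (R : realType) (K : fieldType) (abs : K -> R) :
  ultrametric_abs abs -> abs 1 = 1.
Proof.
case=> H0 Hp HM _.
have h : abs 1 = abs 1 * abs 1 by rewrite -HM mulr1.
have hn : abs 1 != 0 by apply/eqP=> /H0 /eqP; rewrite oner_eq0.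
by apply: (mulfI hn); rewrite mulr1 -h.
Qed.

Lemma absN1 (R : realType) (K : fieldType) (abs : K -> R) :
  ultrametric_abs abs -> abs (-1) = 1.
Proof.
move=> Hu; have := Hu => -[H0 Hp HM _].
have h : abs (-1) * abs (-1) = 1 by rewrite -HM mulrNN mulr1 abs1.
have := Hp (-1); rewrite le_eqVlt => /orP[/eqP e|pos].
  by move: h; rewrite -e mul0r => /eqP; rewrite eq_sym oner_eq0.
have : (abs (-1) - 1) * (abs (-1) + 1) = 0.
  by rewrite mulrDr mulr1 mulrBl h mul1r addrA subrK subrr.
move/eqP; rewrite mulf_eq0 => /orP[/eqP|/eqP]; first by move/eqP; rewrite subr_eq0 => /eqP.
move=> e; have : 0 < abs (-1) + 1 by rewrite ltr_wpDr // ler01.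
by rewrite e ltxx.
Qed.

Lemma absN (R : realType) (K : fieldType) (abs : K -> R) x :
  ultrametric_abs abs -> abs (- x) = abs x.
Proof. move=> Hu; have := Hu => -[_ _ HM _]. by rewrite -mulN1r HM absN1 // mul1r. Qed.

Lemma absB_sym (R : realType) (K : fieldType) (abs : K -> R) x y :
  ultrametric_abs abs -> abs (x - y) = abs (y - x).
Proof. by move=> Hu; rewrite -opprB absN. Qed.

Lemma abs_le_max (R : realType) (K : fieldType) (abs : K -> R) x y c :
  ultrametric_abs abs -> abs x <= c -> abs y <= c -> abs (x + y) <= c.
Proof.
case=> _ _ _ HD hx hy; apply: le_trans (HD x y) _.
by rewrite ge_max hx hy.
Qed.

Lemma abs_lt_max (R : realType) (K : fieldType) (abs : K -> R) x y c :
  ultrametric_abs abs -> abs x < c -> abs y < c -> abs (x + y) < c.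
Proof.
case=> _ _ _ HD hx hy; apply: le_lt_trans (HD x y) _.
by rewrite gt_max hx hy.
Qed.

Lemma abs_nat_le1 (R : realType) (K : fieldType) (abs : K -> R) n :
  ultrametric_abs abs -> abs n%:R <= 1.
Proof.
move=> Hu; elim: n => [|n IH]; first by rewrite abs0 // ler01.
by rewrite -addn1 natrD abs_le_max // abs1.
Qed.

Lemma abs_sum_le (R : realType) (K : fieldType) (abs : K -> R) (I : Type) (r : seq I) (P : pred I) (F : I -> K) c :
  ultrametric_abs abs -> 0 <= c -> (forall i, P i -> abs (F i) <= c) ->
  abs (\sum_(i <- r | P i) F i) <= c.
Proof.
move=> Hu c0 HF; elim/big_rec: _ => [|i x Pi hx]; first by rewrite abs0.
exact: abs_le_max (HF _ Pi) hx.
Qed.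

Definition opE (K : fieldType) (q : {poly K}) (s : nat -> K) (m : nat) : K :=
  \sum_(i < size q) q`_i * s (m + i)%N.

Lemma opE_wid (K : fieldType) (q : {poly K}) s m N : (size q <= N)%N ->
  opE q s m = \sum_(i < N) q`_i * s (m + i)%N.
Proof.
move=> hN; rewrite /opE (big_ord_widen _ (fun i => q`_i * s (m + i)%N) hN).
rewrite big_mkcond /=; apply: eq_bigr => i _.
by case: ifP => // /negbT; rewrite -leqNgt => h; rewrite nth_default // mul0r.
Qed.

Lemma opE_lin (K : fieldType) (c : K) (p q : {poly K}) s m :
  opE (c *: p + q) s m = c * opE p s m + opE q s m.
Proof.
set N := maxn (size p) (size q).
have hp : (size p <= N)%N by rewrite leq_maxl.
have hq : (size q <= N)%N by rewrite leq_maxr.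
have hpq : (size (c *: p + q)%R <= N)%N.
  apply: (leq_trans (size_polyD _ _)); rewrite geq_max hq andbT.
  exact: (leq_trans (size_scale_leq _ _) hp).
rewrite (opE_wid _ _ hpq) (opE_wid _ _ hp) (opE_wid _ _ hq) mulr_sumr -big_split /=.
by apply: eq_bigr => i _; rewrite coefD coefZ mulrDl mulrA.
Qed.

Lemma opE0 (K : fieldType) s m : opE (0 : {poly K}) s m = 0.
Proof. by rewrite /opE size_poly0 big_ord0. Qed.

Lemma opED (K : fieldType) (p q : {poly K}) s m :
  opE (p + q) s m = opE p s m + opE q s m.
Proof. by have := opE_lin 1 p q s m; rewrite scale1r mul1r. Qed.

Lemma opEZ (K : fieldType) c (p : {poly K}) s m :
  opE (c *: p) s m = c * opE p s m.
Proof. by have := opE_lin c p 0 s m; rewrite addr0 opE0 addr0. Qed.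

Lemma opEN (K : fieldType) (p : {poly K}) s m : opE (- p) s m = - opE p s m.
Proof. by rewrite -scaleN1r opEZ mulN1r. Qed.

Lemma opEB (K : fieldType) (p q : {poly K}) s m :
  opE (p - q) s m = opE p s m - opE q s m.
Proof. by rewrite opED opEN. Qed.

Lemma opE_sum (K : fieldType) (I : Type) (r : seq I) (F : I -> {poly K}) s m :
  opE (\sum_(i <- r) F i) s m = \sum_(i <- r) opE (F i) s m.
Proof.
elim: r => [|x r IH]; first by rewrite !big_nil opE0.
by rewrite !big_cons opED IH.
Qed.

Lemma opEX (K : fieldType) (q : {poly K}) s m :
  opE ('X * q) s m = opE q s m.+1.
Proof.
have h : (size ('X * q)%R <= (size q).+1)%N.
  by case: (q =P 0) => [->|/eqP hq]; rewrite ?mulr0 ?size_poly0 // mulrC size_mulX.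
rewrite (opE_wid _ _ h) big_ord_recl /= coefXM /= mul0r add0r /opE.
by apply: eq_bigr => i _; rewrite coefXM /= addSnnS.
Qed.

Lemma opE_mul0 (K : fieldType) (g : {poly K}) s :
  (forall m, opE g s m = 0) -> forall q m, opE (q * g) s m = 0.
Proof.
move=> hg q; elim/poly_ind: q => [|p c IH] m; first by rewrite mul0r opE0.
have -> : (p * 'X + c%:P) * g = 'X * (p * g) + c *: g.
  by rewrite mulrDl mul_polyC (mulrC p 'X) -mulrA.
by rewrite opED opEX IH opEZ hg mulr0 add0r.
Qed.

Lemma opEXn (K : fieldType) (s : nat -> K) m : opE 'X^m s 0 = s m.
Proof.
rewrite /opE size_polyXn big_ord_recr /= coefXn eqxx mul1r add0n.
rewrite big1 ?add0r // => i _; rewrite coefXn.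
by rewrite (ltn_eqF (ltn_ord i)) mul0r.
Qed.

Definition Dif (K : fieldType) (s : nat -> K) n m := opE (('X - 1) ^+ n) s m.

Lemma DifS (K : fieldType) (s : nat -> K) n m :
  Dif s n.+1 m = Dif s n m.+1 - Dif s n m.
Proof. by rewrite /Dif exprS mulrBl mul1r opEB opEX. Qed.

Lemma Dif0 (K : fieldType) (s : nat -> K) m : Dif s 0 m = s m.
Proof.
rewrite /Dif expr0 /opE size_poly1 big_ord_recl big_ord0 addr0 /=.
by rewrite coefC /= mul1r addn0.
Qed.

Lemma s_binom (K : fieldType) (s : nat -> K) m :
  s m = \sum_(i < m.+1) 'C(m, i)%:R * Dif s i 0.
Proof.
rewrite -opEXn -{1}(subrK 1 'X) exprD1n opE_sum; apply: eq_bigr => i _.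
by rewrite -scaler_nat opEZ.
Qed.

Lemma bernoulli_le (R : realType) (d : R) k : 0 <= d -> 1 + k%:R * d <= (1 + d) ^+ k.
Proof.
move=> d0; elim: k => [|k IH]; first by rewrite mul0r addr0 expr0.
rewrite exprSr; apply: le_trans (_ : (1 + k%:R * d) * (1 + d) <= _); last first.
  by rewrite ler_wpM2r // addr_ge0.
rewrite mulrDr mulr1 mulrDl mul1r -natr1 mulrDl mul1r addrA.
by rewrite lerD2l lerDl mulr_ge0 // mulr_ge0 // ler0n.
Qed.

Lemma pow_small (R : realType) (r eps : R) : 0 <= r -> r < 1 -> 0 < eps ->
  exists k, r ^+ k < eps.
Proof.
move=> r0 r1 e0; case: (r =P 0) => [->|/eqP rn0].
  by exists 1%N; rewrite expr1.
have rp : 0 < r by rewrite lt_def rn0.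
set d := r^-1 - 1.
have dp : 0 < d by rewrite subr_gt0 invf_gt1.
set k := Num.bound (eps^-1 / d).
have hk : eps^-1 / d < k%:R by apply: archi_boundP; rewrite divr_ge0 // ?invr_ge0 ltW.
exists k.
have hr : r = (1 + d)^-1 by rewrite /d addrC subrK invrK.
have hb := bernoulli_le k (ltW dp).
have pos : 0 < 1 + k%:R * d by rewrite ltr_pwDl // mulr_ge0 // ?ler0n ltW.
rewrite hr exprVn -[X in _ < X]invrK.
rewrite ltf_pV2 ?posrE ?exprn_gt0 ?invr_gt0 ?(lt_le_trans pos hb) //; last by rewrite addr_gt0.
apply: lt_le_trans hb.
apply: lt_trans (_ : k%:R * d < _); last by rewrite ltrDr.
by rewrite -ltr_pdivrMr.
Qed.

Lemma abs_exp (R : realType) (K : fieldType) (abs : K -> R) x n :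
  ultrametric_abs abs -> abs (x ^+ n) = abs x ^+ n.
Proof.
move=> Hu; have := Hu => -[_ _ HM _]; elim: n => [|n IH].
  by rewrite !expr0 abs1.
by rewrite !exprS HM IH.
Qed.

Lemma char0 (R : realType) (K : fieldType) (abs : K -> R) p :
  prime p -> ultrametric_abs abs -> padic_normalized abs p ->
  forall n, (0 < n)%N -> n%:R != 0 :> K.
Proof.
move=> pp Hu Hn n n0; apply/negP => hn.
have [q hq] := natf0_pchar n0 hn.
have qp := pcharf_prime hq.
have := pFrobenius_aut_nat hq p; rewrite pFrobenius_autE => /(congr1 abs).
rewrite abs_exp // Hn => e.
have pgt1 : (1 < p%:R :> R) by rewrite ltr1n prime_gt1.
have ip0 : 0 < (p%:R :> R)^-1 by rewrite invr_gt0 (lt_trans ltr01).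
have ip1 : (p%:R :> R)^-1 < 1 by rewrite invf_lt1 // (lt_trans ltr01).
have : (p%:R :> R)^-1 ^+ q.-1 < 1 by rewrite exprn_ilt1 ?ltW // -lt0n -ltnS prednK ?prime_gt0 // prime_gt1.
have qe : q = q.-1.+1 by rewrite prednK // prime_gt0.
move: e; rewrite qe exprSr => e.
have : (p%:R :> R)^-1 ^+ q.-1 = 1.
  by apply: (mulIf (lt0r_neq0 ip0)); rewrite mul1r e.
by move=> ->; rewrite ltxx.
Qed.

Definition bin (K : fieldType) (x : K) n := (\prod_(i < n) (x - i%:R)) / (n`!)%:R.

Lemma prod_nat (K : fieldType) n m :
  \prod_(i < n) (m%:R - i%:R) = (m ^_ n)%:R :> K.
Proof.
elim: n m => [|n IH] m; first by rewrite big_ord0 ffactn0.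
rewrite big_ord_recl /= subr0; case: m => [|m].
  by rewrite ffact0n mul0r.
rewrite ffactSS natrM; congr (_ * _); rewrite -IH; apply: eq_bigr => i _.
by rewrite /bump /= add1n -!natr1 opprD addrACA subrr addr0.
Qed.

Lemma bin_nat (K : fieldType) m n : (n`!)%:R != 0 :> K ->
  bin (m%:R : K) n = 'C(m, n)%:R.
Proof.
move=> hn; rewrite /bin prod_nat -bin_ffact natrM mulfK //.
Qed.

Lemma abs_prod_le1 (R : realType) (K : fieldType) (abs : K -> R) (I : Type) (r : seq I) (F : I -> K) :
  ultrametric_abs abs -> (forall i, abs (F i) <= 1) -> abs (\prod_(i <- r) F i) <= 1.
Proof.
move=> Hu HF; have := Hu => -[_ Hp HM _].
elim: r => [|x r IH]; first by rewrite big_nil abs1.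
rewrite big_cons HM; apply: le_trans (_ : 1 * 1 <= 1); last by rewrite mulr1.
by apply: ler_pM.
Qed.

Lemma prod_diff (R : realType) (K : fieldType) (abs : K -> R) (x y : K) n :
  ultrametric_abs abs -> abs x <= 1 -> abs y <= 1 ->
  abs (\prod_(i < n) (y - i%:R) - \prod_(i < n) (x - i%:R)) <= abs (y - x).
Proof.
move=> Hu hx hy; have := Hu => -[_ Hp HM _].
have hb : forall z : K, abs z <= 1 -> forall i : nat, abs (z - i%:R) <= 1.
  by move=> z hz i; apply: abs_le_max => //; rewrite absN // abs_nat_le1.
elim: n => [|n IH]; first by rewrite !big_ord0 subrr abs0 // Hp.
rewrite !big_ord_recr /=.
set A' := \prod_(i < n) _; set A := \prod_(i < n) _.
have -> : A' * (y - n%:R) - A * (x - n%:R) =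
   (A' - A) * (y - n%:R) + A * (y - x).
  by ring.
apply: abs_le_max => //; rewrite HM.
  apply: le_trans (_ : abs (A' - A) * 1 <= _); last by rewrite mulr1.
  by apply: ler_wpM2l => //; apply: hb.
apply: le_trans (_ : 1 * abs (y - x) <= _); last by rewrite mul1r.
by apply: ler_wpM2r => //; apply: abs_prod_le1 => // i; apply: hb.
Qed.

Lemma abs_int_le1 (R : realType) (K : fieldType) (abs : K -> R) (z : int) :
  ultrametric_abs abs -> abs (z%:~R : K) <= 1.
Proof.
move=> Hu; case: z => n; first by rewrite abs_nat_le1.
by rewrite NegzE intrN absN // abs_nat_le1.
Qed.

Lemma in_Zp_le1 (R : realType) (K : fieldType) (abs : K -> R) x :
  ultrametric_abs abs -> in_Zp abs x -> abs x <= 1.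
Proof.
move=> Hu /(_ 1 ltr01) [z hz].
rewrite -(subrK (z%:~R) x); apply: abs_le_max => //; first exact: ltW.
exact: abs_int_le1.
Qed.

Lemma abs_inv (R : realType) (K : fieldType) (abs : K -> R) (b : K) :
  ultrametric_abs abs -> b != 0 -> abs b^-1 = (abs b)^-1.
Proof.
move=> Hu bn0; have := Hu => -[H0 Hp HM _].
have ab : abs b != 0 by apply/eqP => /H0 /eqP; rewrite (negbTE bn0).
apply: (mulfI ab); rewrite -HM mulfV // mulfV //; exact: abs1.
Qed.

Lemma in_Zp_nat (R : realType) (K : fieldType) (abs : K -> R) p x eps :
  prime p -> ultrametric_abs abs -> padic_normalized abs p ->
  in_Zp abs x -> 0 < eps -> exists m : nat, abs (x - m%:R) < eps.
Proof.
move=> pp Hu Hn hx e0; have [z hz] := hx eps e0.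
case: z hz => [n hn|n hn]; first by exists n.
have pgt1 : (1 < p%:R :> R) by rewrite ltr1n prime_gt1.
have ip0 : 0 <= (p%:R :> R)^-1 by rewrite invr_ge0 ler0n.
have ip1 : (p%:R :> R)^-1 < 1 by rewrite invf_lt1 // (lt_trans ltr01).
have [j hj] := pow_small ip0 ip1 e0.
have hle : (n.+1 <= p ^ j.+1 * n.+1)%N by rewrite leq_pmull // expn_gt0 prime_gt0.
exists (p ^ j.+1 * n.+1 - n.+1)%N.
rewrite natrB // NegzE intrN in hn *.
have -> : x - ((p ^ j.+1 * n.+1)%:R - n.+1%:R) = (x - - (n.+1%:R)) - (p ^ j.+1 * n.+1)%:R
  by ring.
apply: abs_lt_max => //; rewrite absN // natrM natrX.
have := Hu => -[_ Hp HM _].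
rewrite HM abs_exp // Hn; apply: (@le_lt_trans _ _ ((p%:R :> R)^-1 ^+ j.+1 * 1)).
  by apply: ler_wpM2l; [rewrite exprn_ge0 | apply: abs_nat_le1].
rewrite mulr1; apply: le_lt_trans hj.
by apply: ler_wiXn2l => //; exact: ltW.
Qed.

Lemma bin_diff (R : realType) (K : fieldType) (abs : K -> R) (x y : K) n :
  ultrametric_abs abs -> (n`!)%:R != 0 :> K -> abs x <= 1 -> abs y <= 1 ->
  abs (bin y n - bin x n) <= abs (y - x) / abs (n`!)%:R.
Proof.
move=> Hu hn hx hy; have := Hu => -[_ Hp HM _].
rewrite /bin -mulrBl HM abs_inv //.
by apply: ler_wpM2r; [rewrite invr_ge0 | apply: prod_diff].
Qed.

Lemma abs_pos (R : realType) (K : fieldType) (abs : K -> R) (b : K) :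
  ultrametric_abs abs -> b != 0 -> 0 < abs b.
Proof.
move=> Hu bn0; have := Hu => -[H0 Hp _ _].
by rewrite lt_def Hp andbT; apply/eqP => /H0 /eqP; rewrite (negbTE bn0).
Qed.

Lemma bin_le1 (R : realType) (K : fieldType) (abs : K -> R) p x n :
  prime p -> ultrametric_abs abs -> padic_normalized abs p ->
  in_Zp abs x -> abs (bin x n) <= 1.
Proof.
move=> pp Hu Hn hx.
have hn : (n`!)%:R != 0 :> K by apply: (char0 pp Hu Hn); rewrite fact_gt0.
have ap := abs_pos Hu hn.
have [m hm] := in_Zp_nat pp Hu Hn hx ap.
rewrite -(subrK (bin m%:R n) (bin x n)); apply: abs_le_max => //; last first.
  by rewrite bin_nat // abs_nat_le1.
apply: le_trans (bin_diff Hu hn _ _) _; first by apply: abs_nat_le1.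
  exact: in_Zp_le1.
by rewrite ler_pdivrMr // mul1r ltW.
Qed.

Lemma opEXnm (K : fieldType) (s : nat -> K) i m : opE 'X^i s m = s (m + i)%N.
Proof.
rewrite /opE size_polyXn big_ord_recr /= coefXn eqxx mul1r.
rewrite big1 ?add0r // => j _; rewrite coefXn.
by rewrite (ltn_eqF (ltn_ord j)) mul0r.
Qed.

Lemma coef_bound (R : realType) (K : fieldType) (abs : K -> R) (rho : R) (gs : seq K) :
  ultrametric_abs abs -> 0 <= rho -> rho <= 1 -> (forall c, c \in gs -> abs c <= rho) ->
  forall i, abs (\prod_(c <- gs) ('X - c%:P))`_i <= 1 /\
            ((i < size gs)%N -> abs (\prod_(c <- gs) ('X - c%:P))`_i <= rho).
Proof.
move=> Hu r0 r1; have := Hu => -[_ Hp HM _].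
elim: gs => [|c gs IH] hc i.
  rewrite big_nil coefC; split => //.
  by case: (i == 0)%N; rewrite ?abs1 ?abs0 // ler01.
have hc' : forall c', c' \in gs -> abs c' <= rho.
  by move=> c' h; apply: hc; rewrite inE h orbT.
have hcc : abs c <= rho by apply: hc; rewrite inE eqxx.
have IH' := IH hc'.
set P := \prod_(c0 <- gs) ('X - c0%:P).
have hcP : forall j, abs (c * P`_j) <= rho.
  move=> j; rewrite HM; apply: le_trans (_ : rho * 1 <= _); last by rewrite mulr1.
  by apply: ler_pM => //; case: (IH' j).
rewrite big_cons mulrBl coefB coefXM coefCM.
case: i => [|i] /=.
  rewrite sub0r absN //; split; last by move=> _; apply: hcP.
  exact: le_trans (hcP 0%N) r1.
case: (IH' i) => h1 h2.
split.
  by apply: abs_le_max => //; rewrite absN //; apply: le_trans (hcP _) r1.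
by rewrite ltnS => hi; apply: abs_le_max => //; [apply: h2 | rewrite absN //].
Qed.

Lemma dif_bound (R : realType) (K : fieldType) (abs : K -> R) (rho : R) (L : nat)
  (c : nat -> K) (D : nat -> nat -> K) :
  ultrametric_abs abs -> 0 <= rho -> rho <= 1 ->
  (forall i, (i < L)%N -> abs (c i) <= rho) ->
  (forall n m, abs (D n m) <= 1) ->
  (forall k m, D (k + L)%N m + \sum_(i < L) c i * D (k + i)%N m = 0) ->
  forall n m, abs (D n m) <= rho ^+ (n %/ L.+1).
Proof.
move=> Hu r0 r1 hc h1 hrec; have := Hu => -[_ Hp HM _].
elim/ltn_ind => n IH m.
case: (ltnP n L) => hn.
  by rewrite divn_small ?expr0 // ltnS ltnW.
have e : n = (n - L + L)%N by rewrite subnK.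
rewrite e; move: (hrec (n - L)%N m) => /eqP; rewrite addr_eq0 => /eqP ->.
rewrite absN //; apply: abs_sum_le => //; first exact: exprn_ge0.
move=> i _; rewrite HM.
have hi : (n - L + i < n)%N.
  by have := ltn_ord i; lia.
apply: le_trans (_ : rho * rho ^+ ((n - L + i) %/ L.+1) <= _).
  by apply: ler_pM => //; [apply: hc | apply: IH].
rewrite -exprS; apply: ler_wiXn2l => //.
rewrite -e -(addn1 (_ %/ _)) -(divnDMl 1) // mul1n.
by apply: leq_div2r; have := ltn_ord i; lia.
Qed.

Lemma dif_rec (K : fieldType) (l : nat) (a s : nat -> K) (rs : seq K) :
  (forall n, s (n + l)%N + \sum_(i < l) a i * s (n + i)%N = 0) ->
  'X^l + \sum_(i < l) a i *: 'X^i = \prod_(r <- rs) ('X - r%:P) ->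
  let h := \prod_(c <- map (fun r => r - 1) rs) ('X - c%:P) in
  forall k m, Dif s (k + size rs) m +
     \sum_(i < size rs) h`_i * Dif s (k + i) m = 0.
Proof.
move=> hrec hg h k m.
have hg0 : forall m, opE ('X^l + \sum_(i < l) a i *: 'X^i) s m = 0.
  move=> m'; rewrite opED opE_sum opEXnm -[RHS](hrec m'); congr (_ + _).
  by apply: eq_bigr => i _; rewrite opEZ opEXnm.
have hc : \prod_(r <- rs) ('X - r%:P) = h \Po ('X - 1).
  rewrite /h big_map; clear h; elim: rs {hg} => [|r rs IH]; first by rewrite !big_nil comp_polyC.
  by rewrite !big_cons comp_polyM -IH comp_polyB comp_polyX comp_polyC polyCB polyC1 opprB addrA subrK.
have hs : size h = (size rs).+1 by rewrite /h size_prod_XsubC size_map.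
have hl : h`_(size rs) = 1.
  have := monic_prod_XsubC (map (fun r => r - 1) rs) predT id.
  by rewrite -/h monicE lead_coefE hs => /eqP.
have := opE_mul0 hg0 (('X - 1) ^+ k) m.
rewrite hg hc comp_polyE hs mulr_sumr opE_sum big_ord_recr /= hl addrC.
congr (_ + _ = _).
  by rewrite -scalerAr scale1r -exprD.
by apply: eq_bigr => i _; rewrite -mul_polyC mulrCA mul_polyC -exprD opEZ.
Qed.

Lemma abs_small0 (R : realType) (K : fieldType) (abs : K -> R) y :
  ultrametric_abs abs -> (forall eps : R, 0 < eps -> abs y < eps) -> y = 0.
Proof.
move=> Hu h; have := Hu => -[H0 Hp _ _]; apply/H0.
apply/eqP; rewrite eq_le Hp andbT; rewrite leNgt; apply/negP => pos.
by have := h _ pos; rewrite ltxx.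
Qed.

Lemma abs_fact_le (R : realType) (K : fieldType) (abs : K -> R) n k :
  ultrametric_abs abs -> abs ((n + k)`!)%:R <= abs (n`!)%:R.
Proof.
move=> Hu; have := Hu => -[_ Hp HM _]; elim: k => [|k IH]; first by rewrite addn0.
rewrite addnS factS natrM HM; apply: le_trans IH.
apply: le_trans (_ : 1 * abs ((n + k)`!)%:R <= _); last by rewrite mul1r.
by apply: ler_wpM2r => //; apply: abs_nat_le1.
Qed.

Lemma interp (R : realType) (K : fieldType) (abs : K -> R) (p : nat)
  (s : nat -> K) (rho : R) (L : nat) :
  prime p -> ultrametric_abs abs -> padic_normalized abs p -> abs_complete abs ->
  0 <= rho -> rho < 1 ->
  (forall n m, abs (Dif s n m) <= rho ^+ (n %/ L.+1)) ->
  exists t : K -> K, continuous_on_Zp abs t /\ forall n : nat, t n%:R = s n.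
Proof.
move=> pp Hu Hn Hc r0 r1 hD.
have Hu' := Hu; case: Hu' => [H0 Hp HM HD].
pose T N x := \sum_(0 <= n < N) bin x n * Dif s n 0.
have small : forall eps : R, 0 < eps -> exists N0, forall N, (N0 <= N)%N ->
    rho ^+ (N %/ L.+1) < eps.
  move=> eps e0; have [k hk] := pow_small r0 r1 e0; exists (k * L.+1)%N => N hN.
  apply: le_lt_trans hk; apply: ler_wiXn2l => //; first exact: ltW.
  by rewrite -(mulnK k (ltn0Sn L)); apply: leq_div2r.
have term : forall x n, in_Zp abs x -> abs (bin x n * Dif s n 0) <= rho ^+ (n %/ L.+1).
  move=> x n hx; rewrite HM; apply: le_trans (_ : 1 * rho ^+ (n %/ L.+1) <= _); last by rewrite mul1r.
  apply: ler_pM; [exact: Hp | exact: Hp | exact: (bin_le1 _ pp Hu Hn hx) | exact: hD].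
have tail : forall x N M, in_Zp abs x -> (N <= M)%N ->
    abs (T M x - T N x) <= rho ^+ (N %/ L.+1).
  move=> x N M hx hNM; rewrite /T (@big_cat_nat _ _ _ N) //= addrAC subrr add0r.
  rewrite big_nat_cond; apply: abs_sum_le => //; first exact: exprn_ge0.
  move=> n /andP[/andP[hn _] _]; apply: le_trans (term _ _ hx) _.
  by apply: ler_wiXn2l => //; [exact: ltW | exact: leq_div2r].
pose P x l := forall eps : R, 0 < eps -> exists N, forall n, (N <= n)%N ->
    abs (T n x - l) < eps.
pose t x := epsilon (inhabits 0) (P x).
have ht : forall x, in_Zp abs x -> P x (t x).
  move=> x hx; apply: epsilon_spec; apply: Hc => eps e0.
  have [N0 hN0] := small _ e0; exists N0 => m n hm hn.
  have -> : T m x - T n x = (T m x - T N0 x) - (T n x - T N0 x) by ring.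
  apply: abs_lt_max => //; rewrite ?absN //; apply: le_lt_trans (tail _ _ _ hx _) _ => //;
    exact: hN0.
have ttail : forall x N eps, in_Zp abs x -> rho ^+ (N %/ L.+1) < eps ->
    abs (t x - T N x) < eps.
  move=> x N eps hx hr.
  have e0 : 0 < eps by apply: le_lt_trans hr; apply: exprn_ge0.
  have [N1 hN1] := ht x hx eps e0.
  have -> : t x - T N x = - (T (maxn N N1) x - t x) + (T (maxn N N1) x - T N x) by ring.
  apply: abs_lt_max => //; first by rewrite absN //; apply: hN1; rewrite leq_maxr.
  by apply: le_lt_trans hr; apply: tail => //; rewrite leq_maxl.
exists t; split.
  move=> x hx eps e0.
  have [N hN] := small _ e0; have hrN := hN N (leqnn N).
  have hf : (N`!)%:R != 0 :> K by apply: (char0 pp Hu Hn); rewrite fact_gt0.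
  have af := abs_pos Hu hf.
  exists (eps * abs (N`!)%:R); first by rewrite mulr_gt0.
  move=> y hy hyx.
  have -> : t y - t x = (t y - T N y) + (T N y - T N x) - (t x - T N x) by ring.
  apply: abs_lt_max => //; last by rewrite absN //; apply: ttail.
  apply: abs_lt_max => //; first by apply: ttail.
  have hc : abs (y - x) / abs (N`!)%:R < eps by rewrite ltr_pdivrMr.
  apply: le_lt_trans hc; rewrite /T -sumrB big_nat_cond.
  apply: abs_sum_le => //; first by rewrite divr_ge0 // ltW.
  move=> n /andP[/andP[_ hn] _]; rewrite -mulrBl HM.
  have hfn : (n`!)%:R != 0 :> K by apply: (char0 pp Hu Hn); rewrite fact_gt0.
  apply: le_trans (_ : abs (y - x) / abs (n`!)%:R * 1 <= _).
    apply: ler_pM => //; first by apply: bin_diff => //; apply: in_Zp_le1.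
    by apply: (le_trans (hD n 0%N)); apply: exprn_ile1 => //; exact: ltW.
  rewrite mulr1; apply: ler_wpM2l => //.
  rewrite lef_pV2 ?posrE ?abs_pos //.
  by have := abs_fact_le n (N - n) Hu; rewrite subnKC // ltnW.
move=> m.
have hm : in_Zp abs (m%:R : K) by move=> eps e0; exists (m%:Z); rewrite subrr abs0.
apply/eqP; rewrite -subr_eq0; apply/eqP; apply: (abs_small0 Hu) => eps e0.
have [N0 hN0] := small _ e0.
set N := maxn N0 m.+1.
have hT : T N m%:R = s m.
  rewrite (s_binom s m) /T (@big_cat_nat _ _ _ m.+1) ?leq_maxr // /=.
  rewrite [X in _ + X]big1_seq ?addr0; last first.
    move=> n /andP[_]; rewrite mem_index_iota => /andP[hn _].
    by rewrite bin_nat ?bin_small ?mul0r // (char0 pp Hu Hn) ?fact_gt0.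
  rewrite big_mkord; apply: eq_bigr => i _.
  by rewrite bin_nat // (char0 pp Hu Hn) ?fact_gt0.
rewrite -hT; exact: ttail _ N _ hm (hN0 N (leq_maxl _ _)).
Qed.

Unset Implicit Arguments.

Theorem corollary3p6 (R : realType) (K : fieldType) (abs : K -> R) (p : nat)
  (l : nat) (a : nat -> K) (s : nat -> K) (e : nat) (pi : K) :
  prime p ->
  ultrametric_abs abs -> padic_normalized abs p -> abs_complete abs ->
  (forall i, (i < l)%N -> in_Zp abs (a i)) ->
  (forall n, in_Zp abs (s n)) ->
  (forall n, s (n + l)%N + \sum_(i < l) a i * s (n + i)%N = 0) ->
  splitting_field_over_Qp abs ('X^l + \sum_(i < l) a i *: 'X^i) ->
  ramification_uniformizer abs p e pi ->
  (e < p.-1)%N ->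
  (forall beta : K, root ('X^l + \sum_(i < l) a i *: 'X^i) beta ->
     abs (beta - 1) <= abs pi) ->
  exists t : K -> K, continuous_on_Zp abs t /\ forall n : nat, t n%:R = s n.
Proof.
move=> pp Hu Hn Hc _ hs hrec [[rs hg] _] [hpi _] _ hroot.
have Hu' := Hu; case: Hu' => [H0 Hp HM HD].
have pgt1 : (1 < p%:R :> R) by rewrite ltr1n prime_gt1.
have ip1 : (p%:R :> R)^-1 < 1 by rewrite invf_lt1 // (lt_trans ltr01).
have r1 : abs pi < 1.
  rewrite ltNge; apply/negP => h.
  have : 1 <= abs pi ^+ e by apply: exprn_ege1.
  by rewrite hpi => /(lt_le_trans ip1); rewrite ltxx.
have r0 := Hp pi.
set L := size rs.
set h := \prod_(c <- map (fun r => r - 1) rs) ('X - c%:P).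
have hrec' := dif_rec hrec hg.
have hcb := coef_bound Hu r0 (ltW r1) (gs := map (fun r => r - 1) rs).
have hcb' : forall i, (i < L)%N -> abs h`_i <= abs pi.
  have hg1 : forall c, c \in map (fun r => r - 1) rs -> abs c <= abs pi.
    by move=> c /mapP [r hr ->]; apply: hroot; rewrite hg root_prod_XsubC.
  move=> i hi; have [_ ] := hcb hg1 i; apply; by rewrite size_map.
have h1 : forall n m, abs (Dif s n m) <= 1.
  elim=> [|n IH] m; first by rewrite Dif0; apply: in_Zp_le1.
  by rewrite DifS; apply: abs_le_max => //; rewrite absN.
have hD := dif_bound Hu r0 (ltW r1) hcb' h1 hrec'.
exact: interp pp Hu Hn Hc r0 r1 hD.
Qed.
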